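(* Let $m\geq 2$, $\mathcal M=\{1,\dots,m\}$, $X_{\mathcal M}=(X_1,\dots,X_m)$ a discrete memoryless multiple source with finite alphabets, and $\mathcal A\subseteq\mathcal M$ with $|\mathcal A|\geq 2$. Then $C_{\mathrm{SK}}(\mathcal A)=I(\mathcal A)$ if and only if there exist $k$ with $2\leq k\leq|\mathcal A|$, a tuple $(\mathcal C_1,\dots,\mathcal C_k)\in\mathscr P_k(\mathcal A)$, and a rate tuple $R_{\mathcal M}\in\mathscr R(\mathcal A)$ such that $\mathrm{SW}(R_{\mathcal M},\mathcal C_i^c)=0$ for all $i\in\{1,\dots,k\}$.
   Context: Define $\mathscr B(\mathcal A):=\{\mathcal B\subsetneq\mathcal M:\ \mathcal B\neq\emptyset,\ \mathcal B\not\supseteq\mathcal A\}$. Let $h(\mathcal B):=H(X_{\mathcal B}\mid X_{\mathcal B^c})$ for $\mathcal B\subseteq\mathcal M$ (complements in $\mathcal M$; $h(\mathcal M)=H(X_{\mathcal M})$). For $R_{\mathcal M}=(R_1,\dots,R_m)\in\mathbb R^m$ let $\mathrm{SW}(R_{\mathcal M},\mathcal B):=\sum_{j\in\mathcal B}R_j-h(\mathcal B)$, and $\mathscr R(\mathcal A):=\{R_{\mathcal M}\in\mathbb R^m:\ \mathrm{SW}(R_{\mathcal M},\mathcal B)\geq 0\ \forall\,\mathcal B\in\mathscr B(\mathcal A)\}$. Let $R_{\mathrm{CO}}(\mathcal A):=\min_{R_{\mathcal M}\in\mathscr R(\mathcal A)}\sum_i R_i$ and $C_{\mathrm{SK}}(\mathcal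 A):=H(X_{\mathcal M})-R_{\mathrm{CO}}(\mathcal A)$. For $k\geq2$, $\mathscr P_k(\mathcal A)$ is the set of tuples $(\mathcal C_1,\dots,\mathcal C_k)$ of pairwise disjoint subsets of $\mathcal M$ with union $\mathcal M$ and $\mathcal C_i\cap\mathcal A\neq\emptyset$ for all $i$; $I(\mathcal C_1,\dots,\mathcal C_k):=\frac1{k-1}\big(\sum_{i=1}^kH(X_{\mathcal C_i})-H(X_{\mathcal M})\big)$; and $I(\mathcal A):=\min\{I(\mathcal C_1,\dots,\mathcal C_k):2\leq k\leq|\mathcal A|,(\mathcal C_1,\dots,\mathcal C_k)\in\mathscr P_k(\mathcal A)\}$. *)

(* Defs.v *)
From mathcomp Require Import all_boot all_order all_algebra.
From mathcomp Require Import all_classical all_reals all_analysis.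
Set Implicit Arguments. Unset Strict Implicit. Unset Printing Implicit Defensive.
Import Order.TTheory GRing.Theory Num.Theory.
Local Open Scope ring_scope.

Section Defs.
Variables (R : realType) (m : nat) (Omega : finType) (p : Omega -> R).
Variables (Alph : 'I_m -> finType) (X : forall i : 'I_m, Omega -> Alph i).

(* The source X_M = (X_1,...,X_m) is given as finite-valued random variables
   X i : Omega -> Alph i on a finite probability space (Omega, p); this is
   equivalent to giving a joint pmf on the product of the finite alphabets. *)

Definition log2 (x : R) : R := ln x / ln 2.

Definition margprob (B : {set 'I_m}) (w : Omega) : R :=
  \sum_(w' : Omega | [forall i in B, X i w' == X i w]) p w'.

Definition entropy (B : {set 'I_m}) : R :=
  - \sum_(w : Omega) p w * log2 (margprob B w).

Definition condentropy (B C : {set 'I_m}) : R := entropy (B :|: C) - entropy C.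

Definition h (B : {set 'I_m}) : R := condentropy B (~: B).

Definition SW (Rt : 'I_m -> R) (B : {set 'I_m}) : R := \sum_(j in B) Rt j - h B.

Definition in_scrB (A B : {set 'I_m}) : bool :=
  [&& B != finset.set0, B \proper [set: 'I_m] & ~~ (A \subset B)].

Definition in_scrR (A : {set 'I_m}) (Rt : 'I_m -> R) : Prop :=
  forall B : {set 'I_m}, in_scrB A B -> 0 <= SW Rt B.

(* R_CO(A) = min over scrR(A) of the sum rate (taken as infimum) *)
Definition R_CO (A : {set 'I_m}) : R :=
  inf [set s | exists Rt : 'I_m -> R, in_scrR A Rt /\ s = \sum_i Rt i].

Definition C_SK (A : {set 'I_m}) : R := entropy [set: 'I_m] - R_CO A.

Definition in_scrP (A : {set 'I_m}) (k : nat) (C : 'I_k -> {set 'I_m}) : Prop :=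
  [/\ forall i j : 'I_k, i != j -> [disjoint C i & C j],
      \bigcup_(i < k) C i = [set: 'I_m]
    & forall i : 'I_k, C i :&: A != finset.set0].

Definition Ipart (k : nat) (C : 'I_k -> {set 'I_m}) : R :=
  (\sum_(i < k) entropy (C i) - entropy [set: 'I_m]) / (k.-1)%:R.

(* I(A) = min over 2 <= k <= |A| and partitions (finite, nonempty: taken as infimum) *)
Definition I_A (A : {set 'I_m}) : R :=
  inf [set s | exists (k : nat) (C : 'I_k -> {set 'I_m}),
          [/\ (2 <= k)%N, (k <= #|A|)%N, in_scrP A C & s = Ipart C]].

End Defs.

(* Main.v *)
Require Import Defs.
From mathcomp Require Import all_boot all_order all_algebra.
From mathcomp Require Import all_classical all_reals all_analysis.
From mathcomp Require Import ring lra.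
Import Order.TTheory GRing.Theory Num.Theory.
Import numFieldNormedType.Exports.
Local Open Scope ring_scope.

Lemma alg (R : realType) (S Hh T : R) k : (2<=k)%N ->
  S *+ k - S - (Hh *+ k - T) = (k.-1)%:R * (S - Hh + (T - Hh)/(k.-1)%:R).
Proof.
case: k => [|[|n]] // _ /=.
have n0 : (n.+1)%:R != 0 :> R by rewrite pnatr_eq0.
rewrite mulrDr (mulrC _ (_ / _)) divfK //.
have e (x : R) : x *+ n.+2 = x * (n.+1)%:R + x by rewrite mulrSr mulr_natr.
rewrite !e.
move: (n.+1)%:R => N.
ring.
Qed.


Section Aux.
Variables (R : realType) (m : nat) (Omega : finType) (p : Omega -> R).
Variables (Alph : 'I_m -> finType) (X : forall i : 'I_m, Omega -> Alph i).
Variable (A : {set 'I_m}).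

Local Notation H := (entropy p X [set: 'I_m]).

Lemma sum_part k (C : 'I_k -> {set 'I_m}) (Rt : 'I_m -> R) :
  in_scrP A C -> \sum_(i < k) \sum_(j in C i) Rt j = \sum_j Rt j.
Proof.
case=> dis cov _.
under eq_bigr do rewrite big_mkcond /=.
rewrite exchange_big /=; apply: eq_bigr => j _.
have : j \in \bigcup_(i < k) C i by rewrite cov inE.
case/bigcupP => i0 _ ji0.
rewrite (bigD1 i0) //= ji0 big1 ?addr0 // => i ne.
by rewrite (disjointFl (dis _ _ ne) ji0).
Qed.

Lemma hC (B : {set 'I_m}) : h p X (~: B) = H - entropy p X B.
Proof. by rewrite /h /condentropy finset.setCK finset.setUC finset.setUCr. Qed.

Lemma sumSW k (C : 'I_k -> {set 'I_m}) (Rt : 'I_m -> R) :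
  (2 <= k)%N -> in_scrP A C ->
  \sum_(i < k) SW p X Rt (~: C i) =
  (k.-1)%:R * (\sum_j Rt j - H + Ipart p X C).
Proof.
move=> k2 PC.
have E i : SW p X Rt (~: C i) =
   (\sum_j Rt j - \sum_(j in C i) Rt j) - (H - entropy p X (C i)).
  rewrite /SW hC; congr (_ - _).
  rewrite [X in _ = X - _](bigID (mem (C i))) /= addrC addrK.
  by apply: eq_bigl => j; rewrite inE.
under eq_bigr do rewrite E.
rewrite !sumrB (@sum_part _ C Rt PC) !sumr_const card_ord /Ipart.
exact: alg.
Qed.



Lemma scrB_comp k (C : 'I_k -> {set 'I_m}) (i : 'I_k) :
  (2 <= k)%N -> in_scrP A C -> in_scrB A (~: C i).
Proof.
move=> k2 [dis cov hA].
case/set0Pn: (hA i) => a; rewrite inE => /andP[aC aA].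
have : (0 < #|[set~ i]|)%N by rewrite cardsC1 card_ord -ltnS prednK // ltnW.
case/card_gt0P => i'; rewrite !inE => ne.
case/set0Pn: (hA i') => b; rewrite inE => /andP[bC bA].
have bn : (b \in C i) = false by rewrite (disjointFr (dis _ _ ne) bC).
apply/and3P; split.
- by apply/set0Pn; exists b; rewrite inE bn.
- rewrite properT; apply/eqP => E.
  have : a \in ~: C i by rewrite E inE.
  by rewrite inE aC.
- by apply/negP => /fintype.subsetP /(_ a aA); rewrite inE aC.
Qed.

Lemma scrB_single (j : 'I_m) :
  (2 <= m)%N -> (2 <= #|A|)%N -> in_scrB A [set j].
Proof.
move=> m2 A2.
apply/and3P; split.
- by apply/set0Pn; exists j; rewrite inE.
- rewrite properT; apply/eqP => E.
  have : (0 < #|[set~ j]|)%N by rewrite cardsC1 card_ord -ltnS prednK // ltnW.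
  case/card_gt0P => l; rewrite !inE => ne.
  have : l \in [set j] by rewrite E inE.
  by rewrite inE (negbTE ne).
- apply/negP => /subset_leq_card; rewrite cards1 => A1.
  by move: (leq_trans A2 A1).
Qed.

Lemma lowbound k (C : 'I_k -> {set 'I_m}) (Rt : 'I_m -> R) :
  (2 <= k)%N -> in_scrP A C -> in_scrR p X A Rt ->
  H - Ipart p X C <= \sum_j Rt j.
Proof.
move=> k2 PC FR.
have h0 : 0 <= \sum_(i < k) SW p X Rt (~: C i).
  by apply: sumr_ge0 => i _; apply: FR; exact: scrB_comp.
rewrite (@sumSW k C Rt k2 PC) in h0.
have kp : 0 < (k.-1)%:R :> R by rewrite ltr0n -ltnS prednK // ltnW.
rewrite pmulr_rge0 // in h0.
lra.
Qed.

Local Notation SR := [set s | exists Rt : 'I_m -> R, in_scrR p X A Rt /\ s = \sum_i Rt i]%classic.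
Local Notation SI := [set s | exists (k : nat) (C : 'I_k -> {set 'I_m}),
          [/\ (2 <= k)%N, (k <= #|A|)%N, in_scrP A C & s = Ipart p X C]]%classic.

Lemma RCO_ge k (C : 'I_k -> {set 'I_m}) :
  (2 <= k)%N -> in_scrP A C -> (SR !=set0)%classic -> H - Ipart p X C <= R_CO p X A.
Proof.
move=> k2 PC ne; apply: lb_le_inf => // s [Rt [FR ->]].
exact: lowbound.
Qed.

Lemma if_dir k (C : 'I_k -> {set 'I_m}) (Rt : 'I_m -> R) :
  (2 <= k)%N -> (k <= #|A|)%N -> in_scrP A C -> in_scrR p X A Rt ->
  (forall i, SW p X Rt (~: C i) = 0) -> C_SK p X A = I_A p X A.
Proof.
move=> k2 kA PC FR SW0.
have eqS : \sum_j Rt j = H - Ipart p X C.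
  have k0 : (k.-1)%:R != 0 :> R by rewrite pnatr_eq0 -lt0n -ltnS prednK // ltnW.
  have := @sumSW k C Rt k2 PC; rewrite big1 // => /esym /eqP.
  rewrite mulf_eq0 (negbTE k0) /= => /eqP E; lra.
have hS : (SR !=set0)%classic by exists (\sum_j Rt j); exists Rt.
have hlbS : has_lbound SR.
  by exists (H - Ipart p X C) => s [Rt' [FR' ->]]; exact: lowbound.
have r1 : R_CO p X A <= H - Ipart p X C.
  by rewrite -eqS; apply: (ge_inf hlbS); exists Rt.
have hI : (SI !=set0)%classic by exists (Ipart p X C), k, C.
have hlbI : has_lbound SI.
  exists (H - \sum_j Rt j) => s [k' [C' [k2' _ PC' ->]]].
  have := @lowbound k' C' Rt k2' PC' FR; lra.
have r2 : I_A p X A <= Ipart p X C by apply: (ge_inf hlbI); exists k, C.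
have r3 : C_SK p X A <= I_A p X A.
  rewrite /C_SK; apply: lb_le_inf => // s [k' [C' [k2' _ PC' ->]]].
  have := @RCO_ge k' C' k2' PC' hS; lra.
apply/le_anti; rewrite r3 /= /C_SK; lra.
Qed.

Lemma cont_sumB (P : pred 'I_m) :
  continuous (fun v : 'rV[R]_m => \sum_(j | P j) v ord0 j).
Proof.
apply: (@continuous_big R 'I_m +%R 0 P).
  exact: add_continuous.
by move=> j _; exact: coord_continuous.
Qed.

Lemma attain : (2 <= m)%N -> (2 <= #|A|)%N ->
  (SR !=set0)%classic -> has_lbound SR ->
  exists Rt, in_scrR p X A Rt /\ \sum_j Rt j = R_CO p X A.
Proof.
move=> m2 A2 hS hlb.
have [s0 [Rt0 [F0 ->]] lt0] := inf_adherent (@ltr01 R) (conj hS hlb).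
set c := inf SR + 1.
pose lo j := h p X [set j]%SET.
pose hi j := c - \sum_(l | l != j) lo l.
pose K :=
  ((\bigcap_(B in [set B | in_scrB A B]) [set v : 'rV[R]_m | 0 <= SW p X (fun j => v ord0 j) B])
  `&` [set v : 'rV[R]_m | \sum_j v ord0 j <= c])%classic.
have memK0 (v : 'rV[R]_m) : in_scrR p X A (fun j => v ord0 j) -> \sum_j v ord0 j <= c -> K v.
  by move=> FR sc; split => // B sB; exact: FR.
have memK (Rt : 'I_m -> R) : in_scrR p X A Rt -> \sum_j Rt j <= c -> K (\row_j Rt j).
  have rowK : (fun j => (\row_j Rt j) ord0 j) = Rt by apply/funext => j; rewrite mxE.
  move=> FR sc; apply: memK0; first by rewrite rowK.
  by under eq_bigr do rewrite mxE.
have KF (v : 'rV[R]_m) : K v -> in_scrR p X A (fun j => v ord0 j) /\ \sum_j v ord0 j <= c.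
  by case=> FB sc; split => // B sB; apply: FB.
have clK : closed K.
  apply: closedI; last by refine (@preimage_closed _ _ (fun v : 'rV[R]_m => \sum_j v ord0 j) [set x | x <= c]%classic _ (@closed_le R c)) => v _; exact: (cont_sumB xpredT v).
  apply: closed_bigI => B _.
  have -> : [set v : 'rV[R]_m | 0 <= SW p X (fun j => v ord0 j) B]%classic =
     [set v : 'rV[R]_m | h p X B <= \sum_(j in B) v ord0 j]%classic.
    by apply/seteqP; split => v /=; rewrite /SW subr_ge0.
  refine (@preimage_closed _ _ (fun v : 'rV[R]_m => \sum_(j in B) v ord0 j) [set x | h p X B <= x]%classic _ (@closed_ge R _)) => v _.
  exact: (cont_sumB (mem B) v).
have cpK : compact K.
  have cB := @rV_compact R m (fun i => `[lo i, hi i]%classic) (fun i => @segment_compact R (lo i) (hi i)).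
  apply: (subclosed_compact clK cB).
  move=> v /KF [FR sc] i /=; rewrite in_itv /=; apply/andP; split.
    have := FR _ (scrB_single i m2 A2); rewrite /SW big_set1 /lo; lra.
  have := sc; rewrite (bigD1 i) //= /hi.
  have : \sum_(l | l != i) lo l <= \sum_(l | l != i) v ord0 l.
    apply: ler_sum => l _.
    have := FR _ (scrB_single l m2 A2); rewrite /SW big_set1 /lo; lra.
  lra.
have neK : (K !=set0)%classic by exists (\row_j Rt0 j); apply: memK => //; exact: ltW.
have [c0 /set_mem Kc0 minc0] := compact_EVT_min neK cpK (continuous_subspaceT (cont_sumB predT)).
have [Fc0 sc0] := KF _ Kc0.
exists (fun j => c0 ord0 j); split => //.
apply/le_anti/andP; split; last by apply: (ge_inf hlb); exists (fun j => c0 ord0 j).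
rewrite leNgt; apply/negP => lt.
set d := \sum_j c0 ord0 j - inf SR.
have d0 : 0 < Order.min 1 d by rewrite lt_min ltr01 /= subr_gt0.
have [s1 [Rt1 [F1 ->]] lt1] := inf_adherent d0 (conj hS hlb).
have m1 : Order.min 1 d <= 1 by rewrite ge_min lexx.
have m2' : Order.min 1 d <= d by rewrite ge_min lexx orbT.
have K1 : K (\row_j Rt1 j) by apply: memK => //; rewrite /c; lra.
have := minc0 _ (mem_set K1).
under [X in _ <= X -> _]eq_bigr do rewrite mxE.
rewrite /d in m2'; lra.
Qed.

Lemma SR_ne : (SR !=set0)%classic.
Proof.
pose c := \sum_(B : {set 'I_m}) `|h p X B|.
have cge B : `|h p X B| <= c.
  rewrite /c (bigD1 B) //= lerDl; apply: sumr_ge0 => ? _; exact: normr_ge0.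
have c0 : 0 <= c by apply: sumr_ge0 => ? _; exact: normr_ge0.
exists (\sum_(j : 'I_m) c); exists (fun _ => c); split => // B /and3P [Bn0 _ _].
rewrite /SW sumr_const.
have : (0 < #|B|)%N by rewrite card_gt0.
case: #|B| => // n _; rewrite mulrS.
have := ler_norm (h p X B); have := cge B; have : 0 <= c *+ n := mulrn_wge0 n c0.
lra.
Qed.

Lemma SI_ne : (2 <= #|A|)%N -> (SI !=set0)%classic.
Proof.
move=> A2.
have : (0 < #|A|)%N by apply: ltnW.
case/card_gt0P => a aA.
have : (0 < #|A :\ a|)%N by move: A2; rewrite (cardsD1 a A) aA.
case/card_gt0P => b; rewrite !inE => /andP[ba bA].
pose C : 'I_2 -> {set 'I_m} := fun i => if val i == 0%N then [set a] else ~: [set a].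
exists (Ipart p X C), 2%N, C; split => //.
split.
- move=> i j; rewrite -(inj_eq val_inj); rewrite /C.
  case: i j => [[|[|//]] ?] [[|[|//]] ?] //= _.
    by rewrite finset.disjoints_subset finset.setCK.
  by rewrite disjoint_sym finset.disjoints_subset finset.setCK.
- apply/setP => x; rewrite [in RHS]inE; apply/bigcupP.
  case: (boolP (x == a)) => xa.
    by exists ord0 => //; rewrite /C /= inE xa.
  by exists (Ordinal (isT : (1 < 2)%N)) => //; rewrite /C /= !inE xa.
- move=> i; rewrite /C; case: i => [[|[|//]] ?] /=; apply/set0Pn.
    by exists a; rewrite !inE eqxx aA.
  by exists b; rewrite !inE ba bA.
Qed.

Lemma IA_min : (SI !=set0)%classic ->
  exists k (C : 'I_k -> {set 'I_m}), [/\ (2 <= k)%N, (k <= #|A|)%N, in_scrP A C &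
    forall k' (C' : 'I_k' -> {set 'I_m}), (2 <= k')%N -> (k' <= #|A|)%N ->
      in_scrP A C' -> Ipart p X C <= Ipart p X C'].
Proof.
case=> _ [k0 [C0 [k20 kA0 PC0 _]]].
pose T := {k : 'I_(#|A|).+1 & {ffun 'I_k -> {set 'I_m}}}.
pose P : pred T := fun t => (2 <= tag t)%N && `[< in_scrP A (tagged t) >].
pose F (t : T) : R := Ipart p X (tagged t).
have mk k (C : 'I_k -> {set 'I_m}) (kA : (k <= #|A|)%N) : (2 <= k)%N -> in_scrP A C ->
    exists2 t : T, P t & F t = Ipart p X C.
  move=> k2 PC.
  have kA' : (k < #|A|.+1)%N by [].
  have E : fun_of_fin [ffun i : 'I_k => C i] = C.
    by apply/funext => i; rewrite ffunE.
  exists (Tagged (fun k : 'I_(#|A|).+1 => {ffun 'I_k -> {set 'I_m}}) (i := Ordinal kA') [ffun i : 'I_k => C i]).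
    by rewrite /P /= k2 /=; apply/asboolP; rewrite E.
  by rewrite /F /= E.
have [t0 Pt0 _] := mk _ _ kA0 k20 PC0.
have := @arg_minP _ _ T t0 P F Pt0; case => t Pt minF.
case/andP: Pt => k2 /asboolP PC.
exists (tag t), (tagged t); split => //.
  by have := ltn_ord (tag t).
move=> k' C' k2' kA' PC'.
have [t' Pt' <-] := mk _ _ kA' k2' PC'.
exact: minF.
Qed.

Lemma main_aux : (2 <= m)%N ->
  (2 <= #|A|)%N ->
  (C_SK p X A = I_A p X A <->
   exists (k : nat) (C : 'I_k -> {set 'I_m}) (Rt : 'I_m -> R),
     [/\ (2 <= k)%N, (k <= #|A|)%N, in_scrP A C, in_scrR p X A Rt
       & forall i : 'I_k, SW p X Rt (~: C i) = 0]).
Proof.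
move=> m2 A2; split; last first.
  by case=> k [C [Rt [k2 kA PC FR SW0]]]; exact: (@if_dir k C Rt).
move=> E.
have hI := SI_ne A2.
have [k [C [k2 kA PC minC]]] := IA_min hI.
have IAe : I_A p X A = Ipart p X C.
  apply/le_anti/andP; split.
    apply: (ge_inf); last by exists k, C.
    exists (Ipart p X C) => s [k' [C' [k2' kA' PC' ->]]]; exact: minC.
  by apply: lb_le_inf => // s [k' [C' [k2' kA' PC' ->]]]; exact: minC.
have hS := SR_ne.
have hlbS : has_lbound SR.
  by exists (H - Ipart p X C) => s [Rt [FR ->]]; exact: (@lowbound k C Rt).
have [f [Ff sf]] := attain m2 A2 hS hlbS.
exists k, C, f; split => //.
have : \sum_(i < k) SW p X f (~: C i) = 0.
  rewrite (@sumSW k C f k2 PC) sf.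
  have -> : R_CO p X A - H + Ipart p X C = 0 by move: E; rewrite /C_SK IAe; lra.
  by rewrite mulr0.
move/psumr_eq0P => h0 i; apply: h0 => // i' _; apply: Ff; exact: scrB_comp.
Qed.
End Aux.

Theorem proposition1 (R : realType) (m : nat) (Omega : finType) (p : Omega -> R)
  (Alph : 'I_m -> finType) (X : forall i : 'I_m, Omega -> Alph i)
  (A : {set 'I_m}) :
  (2 <= m)%N ->
  (forall w, 0 <= p w) -> \sum_(w : Omega) p w = 1 ->
  (2 <= #|A|)%N ->
  (C_SK p X A = I_A p X A <->
   exists (k : nat) (C : 'I_k -> {set 'I_m}) (Rt : 'I_m -> R),
     [/\ (2 <= k)%N, (k <= #|A|)%N, in_scrP A C, in_scrR p X A Rt
       & forall i : 'I_k, SW p X Rt (~: C i) = 0]).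
Proof.
move=> m2 _ _ A2; exact: main_aux.
Qed.
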